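(* Let $D=(V,A,w)$ be a weighted digraph and let $R\in\mathcal{B}(D)$. Then $\mathrm{mac}(D)\ge\frac{w(D)}{4}+\frac{w(R)}{4}$.
   Context: A weighted digraph $D=(V,A,w)$ is a digraph without loops or parallel arcs (opposite arcs allowed) with weights $w:A\to\mathbb{R}_{\ge0}$; $w(H)$ is the total arc weight of a subgraph $H$. For a partition $(X,Y)$ of $V$, $w(X,Y)$ is the total weight of arcs from $X$ to $Y$, and $\mathrm{mac}(D)=\max_{(X,Y)}w(X,Y)$. A subdigraph is connected if its underlying undirected graph is connected. $\mathcal{B}(D)$ denotes the set of bipartite subdigraphs $R$ of $D$ such that for every connected component $R_1$ of $R$ with bipartition $(X_1,Y_1)$, both $X_1$ and $Y_1$ are independent sets in $D$ (no arc of $D$ has both ends in $X_1$, nor both ends in $Y_1$). *)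

(* Defs.v *)
From mathcomp Require Import all_boot all_order all_algebra.
Set Implicit Arguments. Unset Strict Implicit. Unset Printing Implicit Defensive.
Import Order.TTheory GRing.Theory Num.Theory.
Local Open Scope ring_scope.

(* A weighted digraph D = (V, A, w): V a finite type, A : rel V the arc
   relation (A x y = there is an arc x -> y), irreflexive (no loops);
   parallel arcs are impossible by construction, opposite arcs allowed.
   w : V -> V -> R gives the weight of arc (x,y), required >= 0 on arcs;
   its values on non-arcs are irrelevant. *)

Definition weighted_digraph (R : realFieldType) (V : finType)
  (A : rel V) (w : V -> V -> R) : Prop :=
  irreflexive A /\ (forall x y, A x y -> 0 <= w x y).

Definition wtot (R : realFieldType) (V : finType) (B : rel V) (w : V -> V -> R) : R :=
  \sum_(x : V) \sum_(y : V | B x y) w x y.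

Definition wcut (R : realFieldType) (V : finType) (A : rel V) (w : V -> V -> R)
  (X Y : {set V}) : R :=
  \sum_(x in X) \sum_(y in Y | A x y) w x y.

Definition mac (R : realFieldType) (V : finType) (A : rel V) (w : V -> V -> R) : R :=
  \big[Num.max/wcut A w set0 (~: set0)]_(X : {set V}) wcut A w X (~: X).

Definition subdigraph (V : finType) (A : rel V) (VR : {set V}) (AR : rel V) : Prop :=
  forall x y, AR x y -> [&& A x y, x \in VR & y \in VR].

Definition und (V : finType) (AR : rel V) : rel V := fun x y => AR x y || AR y x.

Definition independent (V : finType) (A : rel V) (X : {set V}) : Prop :=
  forall x y, x \in X -> y \in X -> ~~ A x y.

(* R = (VR, AR) in B(D): R is a bipartite subdigraph, witnessed by a proper
   2-colouring c of R (every arc of R joins the two colour classes), such that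
   for every connected component C of R (the set of vertices connected to some
   x in VR in the underlying graph of R), the two sides of its bipartition,
   C with colour true and C with colour false, are independent in D. *)
Definition in_B (V : finType) (A : rel V) (VR : {set V}) (AR : rel V) : Prop :=
  subdigraph A VR AR /\
  exists c : V -> bool,
    (forall x y, AR x y -> c x != c y) /\
    (forall x, x \in VR ->
       independent A [set y | connect (und AR) x y & c y] /\
       independent A [set y | connect (und AR) x y & ~~ c y]).

(* Main.v *)
Require Import Defs.
From mathcomp Require Import all_boot all_order all_algebra zify ring lra.
Import Order.TTheory GRing.Theory Num.Theory.
Local Open Scope ring_scope.
Section Cnt.
Variable V : finType.
Definition flip (k : V) (b : {ffun V -> bool}) : {ffun V -> bool} :=
  [ffun z => if z == k then ~~ b z else b z].
Lemma flipK k : involutive (flip k).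
Proof. move=> b; apply/ffunP=> z; rewrite !ffunE; case: (z == k) => //; exact: negbK. Qed.
Definition cnt (P : pred {ffun V -> bool}) : nat := (\sum_(b : {ffun V -> bool}) P b)%N.
Lemma cnt_flip k P : cnt P = cnt (fun b => P (flip k b)).
Proof. rewrite /cnt (reindex_inj (inv_inj (flipK k))) //. Qed.
Lemma cnt_ext P Q : P =1 Q -> cnt P = cnt Q.
Proof. by move=> e; apply: eq_bigr => b _; rewrite e. Qed.
Lemma cntD P Q : cnt (fun b => P b || Q b) + cnt (fun b => P b && Q b) = (cnt P + cnt Q)%N.
Proof. rewrite /cnt -!big_split /=; apply: eq_bigr => b _; by case: (P b); case: (Q b). Qed.
Definition NN := #|{ffun V -> bool}|.
Lemma cntT : cnt predT = NN.
Proof. by rewrite /cnt sum1_card. Qed.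
Lemma flipE k b : flip k b k = ~~ b k.
Proof. by rewrite ffunE eqxx. Qed.
Lemma flipE' k b z : z != k -> flip k b z = b z.
Proof. by move=> h; rewrite ffunE (negPf h). Qed.
Lemma cnt1 i u : (2 * cnt (fun b => b i == u) = NN)%N.
Proof.
have h0 : cnt pred0 = 0%N by rewrite /cnt big1.
have hT : cnt (fun b => (b i == u) || (b i == ~~ u)) = NN.
  by rewrite -cntT; apply: cnt_ext => b /=; by case: (b i) (u) => [] [].
have hF : cnt (fun b => (b i == u) && (b i == ~~ u)) = 0%N.
  by rewrite -h0; apply: cnt_ext => b /=; by case: (b i) (u) => [] [].
have e : cnt (fun b => b i == ~~ u) = cnt (fun b => b i == u).
  rewrite (cnt_flip i); apply: cnt_ext => b /=; rewrite flipE; by case: (b i) (u) => [] [].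
have := cntD (fun b => b i == u) (fun b => b i == ~~ u).
rewrite hT hF e; lia.
Qed.
Lemma cnt2 i j u v : i != j -> (4 * cnt (fun b => (b i == u) && (b j == v)) = NN)%N.
Proof.
move=> ij.
set C := fun u v => cnt (fun b => (b i == u) && (b j == v)).
have e1 u' v' : C (~~ u') v' = C u' v'.
  rewrite /C (cnt_flip i); apply: cnt_ext => b /=; rewrite flipE flipE' 1?eq_sym //.
  by case: (b i); case: u'.
have e2 u' v' : C u' (~~ v') = C u' v'.
  rewrite /C (cnt_flip j); apply: cnt_ext => b /=; rewrite flipE flipE' //.
  by case: (b j); case: v'.
have s1 u' : (C u' v + C u' (~~ v) = cnt (fun b => b i == u'))%N.
  rewrite /C /cnt -big_split; apply: eq_bigr => b _ /=.
  by case: (b j) (v) (b i == u') => [] [] [].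
have := cnt1 i u; rewrite -s1 e2 /= -/(C u v); lia.
Qed.
End Cnt.
Arguments cnt1 {V}. Arguments cnt2 {V}. Arguments cnt_ext {V}.
Arguments cnt {V}.
Lemma le_bigmax_seq (R : realFieldType) (T : eqType) (F : T -> R) x0 (s : seq T) X :
  X \in s -> F X <= \big[Num.max/x0]_(Y <- s) F Y.
Proof.
elim: s => // a s IH; rewrite inE big_cons le_max => /orP[/eqP->|/IH->]; first by rewrite lexx.
by rewrite orbT.
Qed.

Lemma le_mac (R : realFieldType) (V : finType) (A : rel V) (w : V -> V -> R) X :
  wcut A w X (~: X) <= mac A w.
Proof. rewrite /mac; apply: (@le_bigmax_seq R _ (fun X => wcut A w X (~: X))); by rewrite mem_index_enum. Qed.

Lemma sum_ind (R : realFieldType) (V : finType) (P : pred V) (F : V -> R) :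
  \sum_(x | P x) F x = \sum_x (P x)%:R * F x.
Proof. rewrite big_mkcond; apply: eq_bigr => x _; case: (P x); by rewrite ?mul1r ?mul0r. Qed.

Lemma wcutE (R : realFieldType) (V : finType) (A : rel V) (w : V -> V -> R) X :
  wcut A w X (~: X) = \sum_x \sum_y (A x y)%:R * w x y * ((x \in X) && (y \notin X))%:R.
Proof.
rewrite /wcut sum_ind; apply: eq_bigr => x _; rewrite sum_ind mulr_sumr; apply: eq_bigr => y _.
rewrite inE; case: (x \in X); case: (y \in X); case: (A x y); by rewrite /= ?mul1r ?mul0r ?mulr1 ?mulr0.
Qed.
Theorem mainTheorem4 (R : realFieldType) (V : finType) (A : rel V)
  (w : V -> V -> R) (VR : {set V}) (AR : rel V) :
  weighted_digraph A w ->
  in_B A VR AR ->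
  mac A w >= wtot A w / 4%:R + wtot AR w / 4%:R.
Proof.
move=> [irrA wpos] [sub [c [cprop indep]]].
set e := und AR.
have se : connect_sym e by apply: sym_connect_sym => x y; rewrite /e /und orbC.
set r := fingraph.root e.
have noedge x : x \notin VR -> forall y, connect e x y -> y = x.
  move=> xVR y /connectP[[|z p] //= /andP[exz _] _].
  by case/orP: exz => /sub /and3P[_ h1 h2]; rewrite ?h1 ?h2 in xVR.
have KL x y : A x y -> r x = r y -> c x != c y.
  move=> Axy /(fingraph.rootP se) cxy.
  case: (boolP (x \in VR)) => xVR; last first.
    by move: (noedge x xVR y cxy) Axy => ->; rewrite irrA.
  have [I1 I2] := indep x xVR.
  apply/negP => /eqP cxcy; case cx: (c x).
    by move: (I1 x y); rewrite !inE connect0 cxy -cxcy cx Axy => /(_ isT isT).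
  by move: (I2 x y); rewrite !inE connect0 cxy -cxcy cx Axy => /(_ isT isT).
pose f (b : {ffun V -> bool}) v := b (r v) (+) c v.
have CL x y : A x y ->
    (NN V * (1 + AR x y) <= 4 * cnt (fun b => f b x && ~~ f b y))%N.
  move=> Axy; case: (eqVneq (r x) (r y)) => rxy.
    have ne := KL x y Axy rxy.
    have -> : cnt (fun b => f b x && ~~ f b y) = cnt (fun b => b (r x) == ~~ c x).
      apply: cnt_ext => b; rewrite /f -rxy.
      by move: ne; case: (b (r x)) (c x) (c y) => [] [] [].
    have := cnt1 (r x) (~~ c x); case: (AR x y); lia.
  have nAR : AR x y = false.
    apply/negP => h; move/eqP: rxy; apply; apply/(fingraph.rootP se).
    by apply: connect1; rewrite /e /und h.
  have -> : cnt (fun b => f b x && ~~ f b y) =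
      cnt (fun b => (b (r x) == ~~ c x) && (b (r y) == c y)).
    apply: cnt_ext => b; rewrite /f.
    by case: (b (r x)) (b (r y)) (c x) (c y) => [] [] [] [].
  have := cnt2 _ _ (~~ c x) (c y) rxy; rewrite nAR; lia.
pose Xb b := [set v | f b v].
have S : \sum_(b : {ffun V -> bool}) wcut A w (Xb b) (~: Xb b) <= (NN V)%:R * mac A w.
  apply: (@le_trans _ _ (\sum_(b : {ffun V -> bool}) mac A w)).
    by apply: ler_sum => b _; apply: le_mac.
  by rewrite sumr_const /NN mulr_natl.
have E : \sum_(b : {ffun V -> bool}) wcut A w (Xb b) (~: Xb b) =
    \sum_x \sum_y (A x y)%:R * w x y * (cnt (fun b => f b x && ~~ f b y))%:R.
  under eq_bigr do rewrite wcutE.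
  rewrite exchange_big; apply: eq_bigr => x _; rewrite exchange_big; apply: eq_bigr => y _.
  rewrite -mulr_sumr /cnt natr_sum; congr (_ * _); apply: eq_bigr => b _; by rewrite !inE.
have WA : wtot A w = \sum_x \sum_y (A x y)%:R * w x y.
  by apply: eq_bigr => x _; rewrite sum_ind.
have WR : wtot AR w = \sum_x \sum_y (A x y)%:R * ((AR x y)%:R * w x y).
  apply: eq_bigr => x _; rewrite sum_ind; apply: eq_bigr => y _.
  case h: (AR x y); last by rewrite !mul0r mulr0.
  by move: (sub x y h) => /and3P[-> _ _]; rewrite !mul1r.
have T : (NN V)%:R * (wtot A w + wtot AR w) <=
    4%:R * \sum_(b : {ffun V -> bool}) wcut A w (Xb b) (~: Xb b).
  rewrite E WA WR -big_split !mulr_sumr; apply: ler_sum => x _.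
  rewrite -big_split !mulr_sumr; apply: ler_sum => y _.
  case Axy: (A x y); last by rewrite /= !mul0r addr0 !mulr0 ?mul0r.
  rewrite /= !mul1r.
  have h := CL x y Axy; have := wpos x y Axy.
  rewrite -(ler_nat R) !natrM natrD in h.
  move: h; set k := (cnt _)%:R; set a := (AR x y)%:R; set N := (NN V)%:R.
  move=> h hw; nra.
have Npos : (0 < NN V)%N.
  by apply/card_gt0P; exists [ffun=> true].
have Np : 0 < (NN V)%:R :> R by rewrite ltr0n.
move: S T; set N := (NN V)%:R; set M := mac A w; set s := \sum_(b : {ffun V -> bool}) _.
move=> S T; nra.
Qed.
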